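(* Let $(\Omega,\mathcal{F})$ be a measurable space and $T:\Omega\to\Omega$ a measurable map. Let $\mathbb{V}(A)=\sup_{P\in\Theta}P(A)$, $A\in\mathcal{F}$, be an upper probability, where $\Theta=\{P \text{ probability on }(\Omega,\mathcal{F}) : P(A)\le \mathbb{V}(A)\ \forall A\in\mathcal{F}\}$. Assume $\mathbb{V}$ is continuous (from above), $T$-invariant, and $T$-ergodic. Let $\Theta_0$ be the set of $T$-invariant probabilities in $\Theta$. Then for every $A\in\mathcal{I}$ with $\mathbb{V}(A)>0$ there exists $P'\in\Theta_0$ with $P'(A)=1$.
   Context: $\mathcal{I}=\{A\in\mathcal{F}: T^{-1}A=A\}$ is the $T$-invariant $\sigma$-algebra. $\mathbb{V}$ is continuous if $\mathbb{V}(A_n)\to 0$ whenever $A_n\in\mathcal{F}$, $A_n\downarrow\emptyset$. $\mathbb{V}$ is $T$-invariant if $\mathbb{V}(T^{-1}A)=\mathbb{V}(A)$ for all $A\in\mathcal{F}$. A continuous upper probability $\mathbb{V}$ is $T$-ergodic if $\mathbb{V}(A)\in\{0,1\}$ for every $A\in\mathcal{I}$. A probability $P$ is $T$-invariant if $P(T^{-1}A)=P(A)$ for all $A\in\mathcal{F}$. *)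

(* Defs.v *)
From HB Require Import structures.
From mathcomp Require Import all_boot all_order all_algebra.
From mathcomp Require Import all_classical all_reals all_analysis.
Set Implicit Arguments. Unset Strict Implicit. Unset Printing Implicit Defensive.
Import Order.TTheory GRing.Theory Num.Theory.
Local Open Scope classical_set_scope.
Local Open Scope ring_scope.
Local Open Scope ereal_scope.

Section UpperProb.
Context {d : measure_display} {Om : measurableType d} {R : realType}.

Definition Theta (V : set Om -> \bar R) : set (probability Om R) :=
  [set P | forall A, measurable A -> P A <= V A].

Definition is_upper_probability (V : set Om -> \bar R) : Prop :=
  forall A, measurable A -> V A = ereal_sup [set P A | P in Theta V].

Definition V_continuous (V : set Om -> \bar R) : Prop :=
  forall A : nat -> set Om, (forall n, measurable (A n)) ->
    (forall n, A n.+1 `<=` A n) -> \bigcap_n A n = set0 ->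
    V (A n) @[n --> \oo] --> 0.

Definition invariant_sets (T : Om -> Om) : set (set Om) :=
  [set A | measurable A /\ T @^-1` A = A].

Definition V_Tinvariant (V : set Om -> \bar R) (T : Om -> Om) : Prop :=
  forall A, measurable A -> V (T @^-1` A) = V A.

Definition V_Tergodic (V : set Om -> \bar R) (T : Om -> Om) : Prop :=
  forall A, invariant_sets T A -> V A = 0 \/ V A = 1.

Definition prob_Tinvariant (T : Om -> Om) (P : probability Om R) : Prop :=
  forall A, measurable A -> P (T @^-1` A) = P A.

Definition Theta0 (V : set Om -> \bar R) (T : Om -> Om) : set (probability Om R) :=
  [set P | Theta V P /\ prob_Tinvariant T P].

End UpperProb.

(* Main.v *)
Require Import Defs.
From HB Require Import structures.
From mathcomp Require Import all_boot all_order all_algebra.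
From mathcomp Require Import all_classical all_reals all_analysis.
From mathcomp Require Import ring lra.
Import Order.TTheory GRing.Theory Num.Theory.
Import numFieldNormedType.Exports.
Local Open Scope classical_set_scope.
Local Open Scope ring_scope.

Section MkProb.
Context {d : measure_display} {Om : measurableType d} {R : realType}.

Record good (m : set Om -> R) : Prop := Good {
  m_ge0 : forall B, 0 <= m B ;
  m_0 : m set0 = 0 ;
  m_T : m setT = 1 ;
  m_add : forall X Y, measurable X -> measurable Y -> X `&` Y = set0 ->
     m (X `|` Y) = m X + m Y ;
  m_cont : forall B : nat -> set Om, (forall n, measurable (B n)) ->
    (forall n, B n.+1 `<=` B n) -> \bigcap_n B n = set0 ->
    m (B n) @[n --> \oo] --> 0 }.

Arguments m_ge0 {m}. Arguments m_0 {m}. Arguments m_T {m}. Arguments m_add {m}. Arguments m_cont {m}.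

Definition mkmu (m : set Om -> R) (H : good m) : set Om -> \bar R :=
  fun B => (m B)%:E.
Arguments mkmu {m}.

Lemma mkmu_ssa m (H : good m) : semi_sigma_additive (mkmu H).
Proof.
move=> F mF tF mU.
pose G n := \bigcup_(i in [set i | (n <= i)%N]) F i.
have mG n : measurable (G n) by apply: bigcup_measurable => k _; exact: mF.
have GS n : G n = F n `|` G n.+1.
  apply/seteqP; split => x.
    move=> [i /= ni Fix]; move: ni; rewrite leq_eqVlt => /orP[/eqP ->|ni].
      by left.
    by right; exists i.
  rewrite /G => -[Fx|[i /= ni Fix]]; first by exists n => /=.
  by exists i => //=; apply: ltnW.
have GD n : F n `&` G n.+1 = set0.
  apply/seteqP; split => x // [Fx [i /= ni Fix]].
  suff ni' : n = i by rewrite ni' ltnn in ni.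
  by apply: tF => //; exists x.
have key n : m (\bigcup_i F i) = \sum_(0 <= i < n) m (F i) + m (G n).
  elim: n => [|n IH].
    rewrite big_geq // add0r; congr m; apply/seteqP; split => x.
      by move=> [i _ Fi]; exists i.
    by move=> [i _ Fi]; exists i.
  by rewrite IH big_nat_recr //= -addrA -m_add // -GS.
have G0 : m (G n) @[n --> \oo] --> 0.
  apply: (m_cont H G mG).
    move=> n; rewrite (GS n); exact: subsetUr.
  apply/seteqP; split => x // Hx.
  have [i _ Fix] := Hx 0%N I.
  have [j /= ij Fjx] := Hx i.+1 I.
  suff ij' : i = j by rewrite ij' ltnn in ij.
  by apply: tF => //; exists x.
rewrite /mkmu.
have -> : (fun n => \sum_(0 <= i < n) (m (F i))%:E) =
          (fun n => (m (\bigcup_i F i) - m (G n))%:E).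
  by apply: funext => n; rewrite sumEFin (key n) addrK.
apply: cvg_EFin; first exact: nearW.
rewrite -[X in _ --> X]subr0.
apply: cvgB; first exact: cvg_cst.
exact: G0.
Qed.

Lemma mkmu_ge0 m (H : good m) B : (0 <= mkmu H B)%E.
Proof. by rewrite /mkmu lee_fin; exact: m_ge0. Qed.

HB.instance Definition _ m (H : good m) :=
  isMeasure.Build _ _ _ (mkmu H) (congr1 EFin (m_0 H))
    (mkmu_ge0 _ H) (mkmu_ssa _ H).

HB.instance Definition _ m (H : good m) :=
  Measure_isProbability.Build _ _ _ (mkmu H) (congr1 EFin (m_T H)).

Lemma mk_prob m (H : good m) :
  exists P : probability Om R, forall B, P B = (m B)%:E.
Proof. by exists (mkmu H). Qed.

End MkProb.

Section Ultra.
Context {R : realType}.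

Lemma ultra_lim (U : set_system nat) : UltraFilter U ->
  forall u : nat -> R, (forall n, 0 <= u n <= 1) -> u @ U --> lim (u @ U).
Proof.
move=> UU u u01.
have FU : ProperFilter (u @ U) by apply: fmap_proper_filter.
have cpt : compact (`[0, 1] : set R) := @segment_compact R 0 1.
have F01 : (u @ U) (`[0, 1]%classic : set R) 
  by apply: (filterE (F:=U)) => n; rewrite /= in_itv /=; exact: u01.
have [a [_ cl]] := cpt (u @ U) FU F01.
suff ua : u @ U --> a by rewrite (cvg_lim (@Rhausdorff R) ua).
move=> N Na.
case: (in_ultra_setVsetC (u @^-1` N) UU) => // Hc; exfalso.
have [x [nNx Nx]] := cl (~` N) N Hc Na.
exact: nNx.
Qed.

Lemma oo_U (U : set_system nat) (sU : \oo `<=` U) (u : nat -> R) (l : R) :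
  u @ \oo --> l -> u @ U --> l.
Proof. by move=> h N /h; exact: sU. Qed.

Lemma avg_le (n : nat) (f : nat -> R) (c : R) : (forall k, f k <= c) ->
  (\sum_(k < n.+1) f k) / n.+1%:R <= c.
Proof.
move=> fc; rewrite ler_pdivrMr ?ltr0Sn //.
apply: (le_trans (y := \sum_(k < n.+1) c)); first by apply: ler_sum => k _; exact: fc.
by rewrite sumr_const card_ord mulr_natr.
Qed.

Lemma avg_ge0 (n : nat) (f : nat -> R) : (forall k, 0 <= f k) ->
  0 <= (\sum_(k < n.+1) f k) / n.+1%:R.
Proof. by move=> f0; rewrite divr_ge0 // sumr_ge0. Qed.

End Ultra.

Lemma cvg_le_bound {R : realType} (U : set_system nat) {FU : ProperFilter U}
  (u : nat -> R) (l b : R) : (forall n, u n <= b) -> u @ U --> l -> l <= b.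
Proof.
move=> ub ul.
have := @closed_cvg nat R U FU u [set x | x <= b] (@closed_le R b) _ l ul.
apply; exact: nearW.
Qed.
Lemma cvg_ge_bound {R : realType} (U : set_system nat) {FU : ProperFilter U}
  (u : nat -> R) (l b : R) : (forall n, b <= u n) -> u @ U --> l -> b <= l.
Proof.
move=> ub ul.
have := @closed_cvg nat R U FU u [set x | b <= x] (@closed_ge R b) _ l ul.
apply; exact: nearW.
Qed.

Lemma avg_cst {R : realType} (c : R) n : (\sum_(k < n.+1) c) / n.+1%:R = c.
Proof. by rewrite sumr_const card_ord -[c *+ _]mulr_natr mulfK // pnatr_eq0. Qed.

Lemma main (d : measure_display) (Om : measurableType d) (R : realType)
  (T : Om -> Om) (V : set Om -> \bar R) :
  measurable_fun setT T ->
  is_upper_probability V ->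
  V_continuous V ->
  V_Tinvariant V T ->
  V_Tergodic V T ->
  forall A, invariant_sets T A -> (0 < V A)%E ->
  exists P' : probability Om R, Theta0 V T P' /\ P' A = 1%E.
Proof.
move=> mT Vup Vc Vinv Verg A [mA TA] VA0.
have VA1 : V A = 1%E.
  by case: (Verg A (conj mA TA)) => // h; rewrite h ltxx in VA0.
have preT X : measurable X -> measurable (T @^-1` X).
  by move=> mX; rewrite -[T @^-1` X]setTI; exact: mT.
have miter k : forall X, measurable X -> measurable ((iter k T) @^-1` X).
  elim: k => [//|k IH] X mX.
  exact: (IH _ (preT _ mX)).
have Viter k : forall X, measurable X -> V ((iter k T) @^-1` X) = V X.
  elim: k => [//|k IH] X mX.
  by rewrite -(Vinv X mX) -(IH _ (preT _ mX)).
have Aiter k : (iter k T) @^-1` A = A.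
  elim: k => [//|k IH].
  by change ((iter k T) @^-1` (T @^-1` A) = A); rewrite TA IH.
have pge0 (P : probability Om R) X : 0 <= fine (P X).
  by apply: fine_ge0; exact: measure_ge0.
have pfin (P : probability Om R) X : measurable X -> (fine (P X))%:E = P X.
  by move=> mX; rewrite fineK //; exact: fin_num_measure.
have ple1 (P : probability Om R) X : measurable X -> fine (P X) <= 1.
  by move=> mX; rewrite -lee_fin pfin //; exact: probability_le1.
have exPn n : exists P : probability Om R,
    Theta V P /\ ((1 - n.+1%:R^-1)%:E < P A)%E.
  have : ((1 - n.+1%:R^-1)%:E < ereal_sup [set P A | P in Theta V])%E.
    by rewrite -Vup // VA1 lte_fin ltrBlDr ltrDl invr_gt0 ltr0Sn.
  by move=> /ereal_sup_gt [_ [P ThP <-] lt]; exists P.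
have [Pn HPn] := choice exPn.
have Vfin B : measurable B -> exists r : R, V B = r%:E.
  move=> mB.
  have h1 : (V B <= 1)%E.
    by rewrite Vup //; apply: ge_ereal_sup => _ [P _ <-]; exact: probability_le1.
  have h0 : (0 <= V B)%E.
    by apply: le_trans (measure_ge0 (Pn 0%N) B) _; exact: (HPn 0%N).1 B mB.
  move: h0 h1; case: (V B) => [r| |] h0 h1; first by exists r.
    by rewrite leye_eq in h1.
  by rewrite leeNy_eq in h0.
pose q n B := (\sum_(k < n.+1) fine (Pn n ((iter k T) @^-1` B))) / n.+1%:R.
pose u B n := Num.min (q n B) 1.
have [U [UU sU]] := @ultraFilterLemma nat \oo eventually_filter.
pose m B := lim (u B @ U).
have qge0 n B : 0 <= q n B by rewrite /q; apply: (avg_ge0 n (fun k => fine (Pn n ((iter k T) @^-1` B)))) => k; exact: pge0.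
have qle1 n B : measurable B -> q n B <= 1.
  by move=> mB; rewrite /q; apply: (avg_le n (fun k => fine (Pn n ((iter k T) @^-1` B)))) => k; apply: ple1; exact: miter.
have u01 B n : 0 <= u B n <= 1.
  by rewrite /u le_min qge0 ler01 ge_min lexx orbT.
have ulim B : u B @ U --> m B := ultra_lim _ UU _ (u01 B).
have uq B : measurable B -> u B = fun n => q n B.
  by move=> mB; apply: funext => n; rewrite /u min_l // qle1.
have uniq B c : u B @ U --> c -> m B = c.
  by move=> h; rewrite /m (cvg_lim (@Rhausdorff R) h).
have mge0 B : 0 <= m B.
  apply: (@cvg_ge_bound R U (@ultra_proper _ _ UU) (u B) (m B) 0 _ (ulim B)) => n.
  by case/andP: (u01 B n).
have mle B : measurable B -> ((m B)%:E <= V B)%E.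
  move=> mB; have [r Vr] := Vfin B mB; rewrite Vr lee_fin.
  apply: (@cvg_le_bound R U (@ultra_proper _ _ UU) (u B) (m B) r _ (ulim B)) => n.
  rewrite /u ge_min; apply/orP; left.
  apply: (avg_le n (fun k => fine (Pn n ((iter k T) @^-1` B)))) => k.
  rewrite -lee_fin pfin; last exact: miter.
  by have := (HPn n).1 _ (miter k B mB); rewrite (Viter k B mB) Vr.
have m0 : m set0 = 0.
  apply: uniq; rewrite (uq _ measurable0).
  have -> : (fun n => q n set0) = fun=> 0.
    apply: funext => j; rewrite /q big1 ?mul0r // => i _.
    by rewrite preimage_set0 measure0.
  exact: cvg_cst.
have m1 : m setT = 1.
  apply: uniq; rewrite (uq _ measurableT).
  have -> : (fun n => q n setT) = fun=> 1.
    apply: funext => j; rewrite /q -[RHS](avg_cst 1 j); congr (_ / _).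
    by apply: eq_bigr => i _; rewrite preimage_setT probability_setT.
  exact: cvg_cst.
have madd X Y : measurable X -> measurable Y -> X `&` Y = set0 ->
    m (X `|` Y) = m X + m Y.
  move=> mX mY XY0; apply: uniq.
  rewrite (uq _ (measurableU _ _ mX mY)).
  have -> : (fun n => q n (X `|` Y)) = u X + u Y.
    apply: funext => j; change (q j (X `|` Y) = u X j + u Y j).
    rewrite (uq X mX) (uq Y mY) /q -mulrDl -big_split /=.
    congr (_ / _); apply: eq_bigr => i _.
    have mXi := miter i X mX; have mYi := miter i Y mY.
    rewrite preimage_setU measureU //; last first.
      by rewrite -preimage_setI XY0 preimage_set0.
    exact: fineD (fin_num_measure _ _ mXi) (fin_num_measure _ _ mYi).
  exact: cvgD (ulim X) (ulim Y).
have mcont : forall B : nat -> set Om, (forall n, measurable (B n)) ->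
    (forall n, B n.+1 `<=` B n) -> \bigcap_n B n = set0 ->
    m (B n) @[n --> \oo] --> 0.
  move=> B mB decB emptyB.
  have V0 := Vc B mB decB emptyB.
  have : (fun n => (m (B n))%:E) @ \oo --> 0%E.
    apply: (@squeeze_cvge _ _ _ R (fun=> 0%E) _ (fun n => V (B n)) _ _ (cvg_cst _) V0).
    by apply: nearW => n; rewrite lee_fin mge0 /= mle.
  by move/fine_cvgP => [_ h]; exact: h.
have Hg : good m := @Good _ _ _ m mge0 m0 m1 madd mcont.
have minv B : measurable B -> m (T @^-1` B) = m B.
  move=> mB; have mTB := preT B mB.
  pose e n := (n.+1%:R : R)^-1.
  have e0 : e @ \oo --> 0 by exact: cvg_harmonic.
  have dlim : (u (T @^-1` B) - u B) @ \oo --> 0.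
    rewrite (uq _ mTB) (uq _ mB).
    pose f n k := fine (Pn n ((iter k T) @^-1` B)).
    have f01 n k : 0 <= f n k <= 1.
      by rewrite /f pge0 /= ple1 //; exact: miter.
    have qd n : q n (T @^-1` B) - q n B = (f n n.+1 - f n 0%N) * e n.
      rewrite /q -mulrBl; congr (_ * _).
      have -> : \sum_(k < n.+1) fine (Pn n ((iter k T) @^-1` (T @^-1` B))) =
                \sum_(k < n.+1) f n k.+1 by [].
      have L1 : \sum_(k < n.+1) f n k.+1 = \sum_(k < n) f n k.+1 + f n n.+1.
        by rewrite big_ord_recr.
      have L2 : \sum_(k < n.+1) f n k = f n 0%N + \sum_(k < n) f n k.+1.
        by rewrite big_ord_recl; congr (_ + _); apply: eq_bigr => i _; rewrite lift0.
      rewrite L1; rewrite [X in _ - X = _]L2; ring.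
    apply: (@squeeze_cvgr _ _ _ R (- e) e).
    - apply: nearW => n.
      change (- e n <= q n (T @^-1` B) - q n B <= e n); rewrite qd.
      have en : 0 < e n by rewrite /e invr_gt0 ltr0Sn.
      case/andP: (f01 n n.+1) => ha hb; case/andP: (f01 n 0%N) => hc hd.
      apply/andP; split; nra.
    - by rewrite -oppr0; exact: cvgN.
    - exact: e0.
  have h1 := oo_U _ sU _ _ dlim.
  have h2 : (u (T @^-1` B) - u B) @ U --> m (T @^-1` B) - m B.
    by apply: cvgB; [exact: ulim|exact: ulim].
  have e1 := @cvg_lim _ (@Rhausdorff R) _ U (@ultra_proper _ _ UU) _ _ h1.
  have e2 := @cvg_lim _ (@Rhausdorff R) _ U (@ultra_proper _ _ UU) _ _ h2.
  by apply/subr0_eq; rewrite -e2 e1.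
have mA1 : m A = 1.
  apply: uniq; rewrite (uq A mA).
  have -> : (fun n => q n A) = fun n => fine (Pn n A).
    apply: funext => j; rewrite /q.
    under eq_bigr => i _ do rewrite Aiter.
    by rewrite avg_cst.
  apply: (oo_U _ sU).
  apply: (@squeeze_cvgr _ _ _ R (fun n => 1 - (n.+1%:R : R)^-1) (fun=> 1)).
  - apply: nearW => n /=; rewrite ple1 // andbT.
    have := (HPn n).2; rewrite -(pfin _ _ mA) lte_fin; exact: ltW.
  - rewrite -[X in _ --> X]subr0; apply: cvgB; first exact: cvg_cst.
    exact: cvg_harmonic.
  - exact: cvg_cst.
have [P' P'E] := mk_prob _ Hg.
exists P'; split; [split|].
- by move=> B mB; rewrite P'E; exact: mle.
- by move=> B mB; rewrite !P'E minv.
- by rewrite P'E mA1.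
Qed.

Local Open Scope classical_set_scope.
Local Open Scope ring_scope.
Local Open Scope ereal_scope.

Theorem lemma3p1 (d : measure_display) (Om : measurableType d) (R : realType)
  (T : Om -> Om) (V : set Om -> \bar R) :
  measurable_fun setT T ->
  is_upper_probability V ->
  V_continuous V ->
  V_Tinvariant V T ->
  V_Tergodic V T ->
  forall A, invariant_sets T A -> 0 < V A ->
  exists P' : probability Om R, Theta0 V T P' /\ P' A = 1.
Proof. exact: main. Qed.
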